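(* Fix $1<p,q<\infty$ with $\frac1p+\frac1q=1$, an integer $r>1$, and put $s=r^{1/p}$. Then for every $x\in\mathcal N_s^{(p)}$ we have $\|x\|_p^p\le |x|_{p,r}$.
   Context: For $\alpha>0$ let $C_\alpha=\{\pm\alpha^j: j\in\mathbb Z\}\cup\{0\}$, $\mathcal N_\alpha=\{x\in c_{00}: x(i)\in C_\alpha \text{ for all } i\}$ ($c_{00}$ = finitely supported real sequences), and $\mathcal N_\alpha^{(p)}=\mathcal N_\alpha\cap B_{\ell_p}$. Let $K^{\mathcal M}_{q,r}$ be the smallest subset of $c_{00}$ containing all $\pm e_n$ and such that whenever $y_1,\dots,y_l\in K^{\mathcal M}_{q,r}$, $l\le r$, have pairwise disjoint supports, then $r^{-1/q}(y_1+\dots+y_l)\in K^{\mathcal M}_{q,r}$. Define $|x|_{p,r}=\sup\{\sum_i x(i)y(i): y\in K^{\mathcal M}_{q,r}\}$. *)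

(* Defs.v *)
From Stdlib Require Import Reals ZArith.
From Coquelicot Require Import Coquelicot.
Open Scope R_scope.

Definition c00 (x : nat -> R) : Prop :=
  exists N : nat, forall i : nat, (N <= i)%nat -> x i = 0.

(* nonnegative real power with 0^a = 0 (a > 0 in all uses) *)
Definition rpow (a b : R) : R := if Rle_dec a 0 then 0 else Rpower a b.

Definition C_set (alpha t : R) : Prop :=
  t = 0 \/ exists j : Z, t = powerRZ alpha j \/ t = - powerRZ alpha j.

Definition lp_norm (p : R) (x : nat -> R) : R :=
  rpow (Series (fun i => rpow (Rabs (x i)) p)) (1 / p).

Definition N_alpha_p (alpha p : R) (x : nat -> R) : Prop :=
  c00 x /\ (forall i, C_set alpha (x i)) /\ lp_norm p x <= 1.

Definition unit_vec (n : nat) : nat -> R := fun i => if Nat.eqb i n then 1 else 0.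

Inductive KM (q : R) (r : nat) : (nat -> R) -> Prop :=
| KM_pos (n : nat) : KM q r (unit_vec n)
| KM_neg (n : nat) : KM q r (fun i => - unit_vec n i)
| KM_comb (l : nat) (ys : nat -> nat -> R) :
    (1 <= l)%nat -> (l <= r)%nat ->
    (forall k, (k < l)%nat -> KM q r (ys k)) ->
    (forall k k' i, (k < l)%nat -> (k' < l)%nat -> k <> k' ->
        ys k i <> 0 -> ys k' i = 0) ->
    KM q r (fun i => Rpower (INR r) (- (1 / q)) * sum_f_R0 (fun k => ys k i) (l - 1)).

Definition inner (x y : nat -> R) : R := Series (fun i => x i * y i).

Definition norm_pr (q : R) (r : nat) (x : nat -> R) : Rbar :=
  Lub_Rbar (fun t => exists y, KM q r y /\ t = inner x y).

(* Main.v *)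
Require Import Defs.
From Stdlib Require Import Reals ZArith.
From Coquelicot Require Import Coquelicot.
From Stdlib Require Import Lia Lra List.
Open Scope R_scope.

Fixpoint fs (a : nat -> R) (n : nat) : R :=
  match n with O => 0 | S m => fs a m + a m end.

Lemma sum_f_fs a n : sum_f_R0 a n = fs a (S n).
Proof. induction n; simpl in *. lra. rewrite IHn. simpl. lra. Qed.

Lemma fs_stable a M : (forall j, (M <= j)%nat -> a j = 0) ->
  forall n, (M <= n)%nat -> fs a n = fs a M.
Proof.
  intros H n Hn. induction Hn as [|m Hm IH]. reflexivity. simpl. rewrite IH, H; [lra|lia].
Qed.

Lemma Series_finite a M : (forall j, (M <= j)%nat -> a j = 0) -> Series a = fs a M.
Proof.
  intros H. apply is_series_unique. apply is_series_Reals.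
  intros eps Heps. exists M. intros n Hn. rewrite sum_f_fs.
  rewrite (fs_stable a M H (S n)) by lia. unfold R_dist. rewrite Rminus_eq_0, Rabs_R0. lra.
Qed.

Lemma fs_ge a n N : (forall j, 0 <= a j) -> (n < N)%nat -> a n <= fs a N.
Proof.
  intros Ha H. induction H; simpl.
  - assert (0 <= fs a n). { clear -Ha. induction n; simpl. lra. specialize (Ha n). lra. } 
    lra.
  - specialize (Ha m). lra.
Qed.

Definition sumR {A} (g : A -> R) (l : list A) : R := fold_right (fun a s => g a + s) 0 l.
Definition sumN {A} (g : A -> nat) (l : list A) : nat := fold_right (fun a s => (g a + s)%nat) 0%nat l.

Lemma sumR_app {A} g (l1 l2 : list A) : sumR g (l1 ++ l2) = sumR g l1 + sumR g l2.
Proof. induction l1; simpl. lra. unfold sumR in *. simpl. rewrite IHl1. lra. Qed.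
Lemma sumN_app {A} g (l1 l2 : list A) : sumN g (l1 ++ l2) = (sumN g l1 + sumN g l2)%nat.
Proof. induction l1; simpl. lia. unfold sumN in *. simpl. rewrite IHl1. lia. Qed.
Lemma sumR_filter {A} g (P : A -> bool) l :
  sumR g l = sumR g (filter P l) + sumR g (filter (fun a => negb (P a)) l).
Proof. induction l; simpl. unfold sumR; simpl; lra. destruct (P a); simpl; unfold sumR in *; simpl; rewrite IHl; lra. Qed.
Lemma sumN_filter {A} g (P : A -> bool) l :
  sumN g l = (sumN g (filter P l) + sumN g (filter (fun a => negb (P a)) l))%nat.
Proof. induction l; simpl. reflexivity. destruct (P a); simpl; unfold sumN in *; simpl; rewrite IHl; lia. Qed.
Lemma sumR_ext {A} g h (l : list A) : (forall a, In a l -> g a = h a) -> sumR g l = sumR h l.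
Proof. induction l; simpl; intros H. reflexivity. unfold sumR in *; simpl. rewrite H, IHl; auto. Qed.
Lemma sumN_const {A} g c (l : list A) : (forall a, In a l -> g a = c) -> sumN g l = (length l * c)%nat.
Proof. induction l; simpl; intros H. reflexivity. unfold sumN in *; simpl. rewrite H, IHl; auto. Qed.
Lemma sumN_ge_len {A} g (l : list A) : (forall a, (1 <= g a)%nat) -> (length l <= sumN g l)%nat.
Proof. induction l; simpl; intros H. lia. unfold sumN in *; simpl. pose proof (H a). specialize (IHl H). lia. Qed.
Lemma sumN_dvd {A} g m (l : list A) : (forall a, In a l -> Nat.divide m (g a)) -> Nat.divide m (sumN g l).
Proof. induction l; simpl; intros H. apply Nat.divide_0_r. unfold sumN in *; simpl.
  apply Nat.divide_add_r; auto. Qed.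
Lemma sumR_scal {A} g c (l : list A) : sumR (fun a => c * g a) l = c * sumR g l.
Proof. induction l; simpl. unfold sumR; simpl; lra. unfold sumR in *; simpl. rewrite IHl. lra. Qed.

Section K.
Variable q : R.
Variable r : nat.
Hypothesis Hr : (1 < r)%nat.

Notation item := (nat * (nat -> R))%type.
Definition wt (k : nat) : R := Rpower (INR r) (- INR k / q).
Definition F (L : list item) (i : nat) : R := sumR (fun it => wt (fst it) * snd it i) L.
Definition ind (v : R) : nat := if Req_EM_T v 0 then 0%nat else 1%nat.
Definition cnt (i : nat) (L : list item) : nat := sumN (fun it => ind (snd it i)) L.
Definition Kr (N : nat) (L : list item) : nat := sumN (fun it => r ^ (N - fst it))%nat L.
Definition meas (L : list item) : nat := sumN (fun it => S (fst it)) L.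

Lemma cnt0_sum i (L : list item) : cnt i L = 0%nat -> sumR (fun it => snd it i) L = 0.
Proof.
  induction L; simpl. reflexivity. unfold cnt, sumN, sumR in *; simpl.
  unfold ind at 1. destruct (Req_EM_T (snd a i) 0). intros H; rewrite e, IHL; auto; lra. lia.
Qed.

Lemma cnt_nth i (L : list item) d k k' : (k < length L)%nat -> (k' < length L)%nat -> k <> k' ->
  snd (nth k L d) i <> 0 -> snd (nth k' L d) i <> 0 -> (2 <= cnt i L)%nat.
Proof.
  assert (G : forall L0 k0, (k0 < length L0)%nat -> snd (nth k0 L0 d) i <> 0 -> (1 <= cnt i L0)%nat).
  { induction L0; simpl; intros k0 Hk Hn. lia. change (cnt i (a :: L0)) with (ind (snd a i) + cnt i L0)%nat.
    destruct k0. unfold ind; destruct (Req_EM_T (snd a i) 0); [contradiction|lia].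
    specialize (IHL0 k0 ltac:(lia) Hn). lia. }
  revert k k'. induction L; simpl; intros k k' H1 H2 H3 H4 H5. lia.
  change (cnt i (a :: L)) with (ind (snd a i) + cnt i L)%nat.
  destruct k, k'.
  - lia.
  - unfold ind; destruct (Req_EM_T (snd a i) 0); [contradiction|]. specialize (G L k' ltac:(lia) H5). lia.
  - unfold ind; destruct (Req_EM_T (snd a i) 0); [contradiction|]. specialize (G L k ltac:(lia) H4). lia.
  - specialize (IHL k k' ltac:(lia) ltac:(lia) ltac:(lia) H4 H5). lia.
Qed.

Lemma sum_f_nth (g : item -> R) (L : list item) d : L <> nil ->
  sum_f_R0 (fun k => g (nth k L d)) (length L - 1) = sumR g L.
Proof.
  induction L as [|a L IH]; intros H. congruence.
  destruct L as [|b L]. simpl. unfold sumR; simpl; lra.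
  replace (length (a :: b :: L) - 1)%nat with (S (length (b :: L) - 1)) by (simpl; lia).
  rewrite decomp_sum by lia. simpl pred. simpl nth.
  transitivity (g a + sum_f_R0 (fun k => g (nth k (b :: L) d)) (length (b :: L) - 1)).
  { reflexivity. }
  rewrite (IH ltac:(discriminate)). reflexivity.
Qed.


Hypothesis Hq : 0 < q.

Lemma wt_step D : (1 <= D)%nat -> wt (D - 1) * Rpower (INR r) (- (1 / q)) = wt D.
Proof.
  intros HD. unfold wt. rewrite <- Rpower_plus. f_equal.
  rewrite minus_INR by lia. simpl INR. field. lra.
Qed.

Lemma wt0 : wt 0 = 1.
Proof. unfold wt. simpl INR. replace (- 0 / q) with 0 by (field; lra). apply Rpower_O.
  apply lt_0_INR; lia. Qed.

Lemma in_le_max l x : In x l -> (x <= list_max l)%nat.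
Proof. induction l; simpl; intros H. contradiction. destruct H; subst; try specialize (IHl H); lia. Qed.

Lemma max_in l : l <> nil -> In (list_max l) l.
Proof.
  induction l as [|a l IH]; intros H. congruence. simpl.
  destruct l as [|b l']. simpl. left; lia.
  specialize (IH ltac:(discriminate)).
  destruct (Nat.max_spec a (list_max (b :: l'))) as [[_ E]|[_ E]]; rewrite E; auto.
Qed.

Lemma rpow_pos N : (1 <= r ^ N)%nat.
Proof. pose proof (Nat.pow_nonzero r N ltac:(lia)). lia. Qed.

Lemma kraft : forall m (L : list item) N, (meas L <= m)%nat -> L <> nil ->
  (forall it, In it L -> KM q r (snd it)) -> (forall i, (cnt i L <= 1)%nat) ->
  (forall it, In it L -> (fst it <= N)%nat) -> (Kr N L <= r ^ N)%nat ->
  exists z, KM q r z /\ forall i, z i = F L i.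
Proof.
  induction m as [|m IHm]; intros L N Hm Hne HKM Hcnt HN HK.
  { destruct L; [congruence|]. unfold meas, sumN in Hm; simpl in Hm; lia. }
  destruct (existsb (fun it : item => fst it =? 0)%nat L) eqn:E0.
  - remember (filter (fun it : item => fst it =? 0)%nat L) as Z eqn:EZ.
    remember (filter (fun it : item => negb (fst it =? 0)%nat) L) as O eqn:EO.
    assert (HKs := sumN_filter (fun it : item => r ^ (N - fst it))%nat (fun it : item => fst it =? 0)%nat L).
    rewrite <- EZ, <- EO in HKs.
    assert (KZ : sumN (fun it : item => r ^ (N - fst it))%nat Z = (length Z * r ^ N)%nat).
    { apply sumN_const; intros a Ha. rewrite EZ in Ha. apply filter_In in Ha. destruct Ha as [_ Ha].
      apply Nat.eqb_eq in Ha. rewrite Ha, Nat.sub_0_r; reflexivity. }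
    assert (KO : (length O <= sumN (fun it : item => r ^ (N - fst it))%nat O)%nat).
    { apply sumN_ge_len. intros; apply rpow_pos. }
    assert (LZ : (1 <= length Z)%nat).
    { apply existsb_exists in E0. destruct E0 as [it [Hi Hf]].
      assert (In it Z) by (rewrite EZ; apply filter_In; auto).
      destruct Z; simpl in *; [contradiction|lia]. }
    pose proof (rpow_pos N).
    unfold Kr in HK. rewrite HKs, KZ in HK.
    assert (length O = 0%nat /\ length Z = 1%nat) as [LO1 LZ1] by nia.
    apply length_zero_iff_nil in LO1.
    destruct Z as [|it [|]]; simpl in LZ1; try lia.
    assert (Hit : In it L /\ fst it = 0%nat).
    { assert (In it (it :: nil)) by (left; auto). rewrite EZ in H0. apply filter_In in H0.
      destruct H0 as [H0 H1]. apply Nat.eqb_eq in H1. auto. }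
    exists (snd it). split. apply HKM; tauto.
    intros i. unfold F. rewrite (sumR_filter _ (fun it : item => fst it =? 0)%nat L).
    rewrite <- EZ, <- EO, LO1. unfold sumR; simpl. destruct Hit as [_ ->]. rewrite wt0. lra.
  - assert (Hpos : forall it, In it L -> (1 <= fst it)%nat).
    { intros it Hit. destruct (fst it) eqn:E; [|lia].
      assert (existsb (fun it : item => fst it =? 0)%nat L = true).
      { apply existsb_exists. exists it. rewrite E. auto. }
      congruence. }
    set (D := list_max (map fst L)).
    assert (HleD : forall it, In it L -> (fst it <= D)%nat).
    { intros it Hit. apply in_le_max. apply in_map. auto. }
    assert (HinD : exists it, In it L /\ fst it = D).
    { assert (map fst L <> nil) by (destruct L; simpl; congruence).
      apply max_in in H. apply in_map_iff in H. destruct H as [it [E H]]. eauto. }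
    destruct HinD as [it0 [Hit0 Eit0]].
    assert (D1 : (1 <= D)%nat) by (rewrite <- Eit0; auto).
    assert (DN : (D <= N)%nat) by (rewrite <- Eit0; auto).
    remember (filter (fun it : item => fst it =? D)%nat L) as H eqn:EH.
    remember (filter (fun it : item => negb (fst it =? D)%nat) L) as O eqn:EO.
    assert (HinH : forall a, In a H -> In a L /\ fst a = D).
    { intros a Ha. rewrite EH in Ha. apply filter_In in Ha. destruct Ha as [? Ha].
      apply Nat.eqb_eq in Ha. auto. }
    assert (HinO : forall a, In a O -> In a L /\ (fst a <= D - 1)%nat).
    { intros a Ha. rewrite EO in Ha. apply filter_In in Ha. destruct Ha as [Ha Hb].
      apply Bool.negb_true_iff, Nat.eqb_neq in Hb. specialize (HleD a Ha). split; auto; lia. }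
    assert (LH : (1 <= length H)%nat).
    { assert (In it0 H) by (rewrite EH; apply filter_In; split; auto; apply Nat.eqb_eq; auto).
      destruct H; simpl in *; [contradiction|lia]. }
    set (c := Nat.min (length H) r).
    remember (firstn c H) as H1 eqn:EH1.
    remember (skipn c H) as H2 eqn:EH2.
    assert (EHH : H = H1 ++ H2) by (rewrite EH1, EH2; symmetry; apply firstn_skipn).
    assert (LH1 : length H1 = c) by (rewrite EH1, length_firstn; unfold c; lia).
    assert (HinH1 : forall a, In a H1 -> In a L /\ fst a = D).
    { intros a Ha. apply HinH. rewrite EHH. apply in_app_iff; auto. }
    assert (HinH2 : forall a, In a H2 -> In a L /\ fst a = D).
    { intros a Ha. apply HinH. rewrite EHH. apply in_app_iff; auto. }
    assert (decN : forall g : item -> nat, sumN g L = (sumN g H1 + sumN g H2 + sumN g O)%nat).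
    { intros g. rewrite (sumN_filter g (fun it : item => fst it =? D)%nat L), <- EH, <- EO, EHH, sumN_app. lia. }
    assert (decR : forall g : item -> R, sumR g L = sumR g H1 + sumR g H2 + sumR g O).
    { intros g. rewrite (sumR_filter g (fun it : item => fst it =? D)%nat L), <- EH, <- EO, EHH, sumR_app. lra. }
    assert (Hc1 : (1 <= c)%nat) by (unfold c; lia).
    assert (Hcr : (c <= r)%nat) by (unfold c; lia).
    set (d := (0%nat, fun _ : nat => 0) : item).
    set (ys := fun k i => snd (nth k H1 d) i).
    set (z0 := fun i => Rpower (INR r) (- (1 / q)) * sum_f_R0 (fun k => ys k i) (c - 1)).
    assert (H1ne : H1 <> nil) by (intro E; rewrite E in LH1; simpl in LH1; lia).
    assert (Hz0 : forall i, z0 i = Rpower (INR r) (- (1 / q)) * sumR (fun it : item => snd it i) H1).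
    { intros i. unfold z0, ys. rewrite <- LH1.
      rewrite (sum_f_nth (fun it : item => snd it i) H1 d H1ne). reflexivity. }
    assert (cntH1 : forall i, (cnt i H1 + cnt i H2 + cnt i O <= 1)%nat).
    { intros i. specialize (Hcnt i). unfold cnt in *. rewrite decN in Hcnt. lia. }
    assert (KMz0 : KM q r z0).
    { apply (KM_comb q r c ys Hc1 Hcr).
      - intros k Hk. unfold ys. apply HKM. apply HinH1. apply nth_In. lia.
      - intros k k' i Hk Hk' Hkk' Hy. destruct (Req_EM_T (ys k' i) 0) as [e|n]; auto.
        exfalso. pose proof (cnt_nth i H1 d k k' ltac:(lia) ltac:(lia) Hkk' Hy n).
        specialize (cntH1 i). lia. }
    set (L' := (D - 1, z0)%nat :: H2 ++ O).
    assert (Hind : forall i, (ind (z0 i) <= cnt i H1)%nat).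
    { intros i. destruct (cnt i H1) eqn:E.
      - apply cnt0_sum in E. rewrite Hz0, E, Rmult_0_r. unfold ind.
        destruct (Req_EM_T 0 0); [lia|congruence].
      - unfold ind. destruct (Req_EM_T _ 0); lia. }
    assert (measH1 : meas H1 = (c * S D)%nat).
    { unfold meas. rewrite (sumN_const _ (S D)), LH1; auto. intros a Ha. rewrite (proj2 (HinH1 a Ha)); auto. }
    assert (KH1 : Kr N H1 = (c * r ^ (N - D))%nat).
    { unfold Kr. rewrite (sumN_const _ (r ^ (N - D))), LH1; auto. intros a Ha. rewrite (proj2 (HinH1 a Ha)); auto. }
    destruct (IHm L' N) as [z [KMz Hz]].
    + unfold L', meas. simpl. rewrite sumN_app. unfold meas in Hm, measH1. rewrite decN in Hm.
      rewrite measH1 in Hm. nia.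
    + unfold L'; discriminate.
    + intros a Ha. unfold L' in Ha. destruct Ha as [Ha|Ha]. subst a. exact KMz0.
      apply in_app_iff in Ha. destruct Ha as [Ha|Ha]. apply HKM, HinH2, Ha. apply HKM, HinO, Ha.
    + intros i. unfold L', cnt. simpl. rewrite sumN_app. fold (cnt i H2) (cnt i O).
      specialize (cntH1 i). specialize (Hind i). lia.
    + intros a Ha. unfold L' in Ha. destruct Ha as [Ha|Ha]. subst a. simpl. lia.
      apply in_app_iff in Ha. destruct Ha as [Ha|Ha]. apply HN, HinH2, Ha. apply HN, HinO, Ha.
    + unfold L', Kr. simpl. rewrite sumN_app. fold (Kr N H2) (Kr N O).
      unfold Kr in HK. rewrite decN in HK. fold (Kr N H1) (Kr N H2) (Kr N O) in HK. rewrite KH1 in HK.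
      assert (EP : (r ^ (N - (D - 1)) = r * r ^ (N - D))%nat).
      { replace (N - (D - 1))%nat with (S (N - D)) by lia. reflexivity. }
      destruct (Nat.le_gt_cases r (length H)) as [Hge|Hlt].
      * assert (c = r) by (unfold c; lia). rewrite H0 in HK. lia.
      * assert (c = length H) by (unfold c; lia).
        assert (H2nil : H2 = nil).
        { rewrite EH2. apply skipn_all2. lia. }
        rewrite H2nil in *. unfold Kr at 1 in HK. unfold Kr at 1. simpl. simpl in HK.
        set (mm := (r ^ (N - (D - 1)))%nat) in *.
        assert (Dv : Nat.divide mm (Kr N O)).
        { apply sumN_dvd. intros a Ha. destruct (HinO a Ha) as [_ Hle].
          exists (r ^ (D - 1 - fst a))%nat. unfold mm. rewrite <- Nat.pow_add_r. f_equal. lia. }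
        destruct Dv as [a Ea].
        assert (Er : (r ^ N = r ^ (D - 1) * mm)%nat).
        { unfold mm. rewrite <- Nat.pow_add_r. f_equal. lia. }
        pose proof (rpow_pos (N - D)).
        rewrite Ea, Er in *.
        assert (a * mm < r ^ (D - 1) * mm)%nat by nia.
        assert (a < r ^ (D - 1))%nat by (apply (Nat.mul_lt_mono_pos_r mm); nia).
        nia.
    + exists z. split; auto. intros i. rewrite Hz. unfold F. rewrite (decR (fun it : item => wt (fst it) * snd it i)).
      unfold L'. cbn [sumR fold_right]. fold (sumR (fun it : item => wt (fst it) * snd it i) (H2 ++ O)).
      rewrite sumR_app. cbn [fst snd].
      rewrite (sumR_ext _ (fun it : item => wt D * snd it i) H1).
      2:{ intros a Ha. rewrite (proj2 (HinH1 a Ha)). reflexivity. }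
      rewrite sumR_scal, Hz0, <- (wt_step D D1). lra.
Qed.

End K.

Section X.
Variables (p q : R) (r : nat) (x : nat -> R).
Hypotheses (Hp : 1 < p) (Hq : 1 < q) (Hpq : 1 / p + 1 / q = 1) (Hr : (1 < r)%nat).

Let rr := INR r.
Lemma rr_gt1 : 1 < rr.
Proof. unfold rr. apply lt_1_INR. lia. Qed.

Definition a (j : nat) : R := rpow (Rabs (x j)) p.

Lemma a_nonneg j : 0 <= a j.
Proof. unfold a, rpow. destruct (Rle_dec _ 0). lra. left; apply exp_pos. Qed.

Lemma rpow_pos_eq u b : 0 < u -> rpow u b = Rpower u b.
Proof. intros H. unfold rpow. destruct (Rle_dec u 0); [lra|auto]. Qed.

Lemma a_of_t t n : (x n = Rpower rr t \/ x n = - Rpower rr t) -> a n = Rpower rr (t * p).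
Proof.
  intros Hx. unfold a.
  assert (Hpos : 0 < Rpower rr t) by apply exp_pos.
  assert (Rabs (x n) = Rpower rr t).
  { destruct Hx as [-> | ->]. apply Rabs_pos_eq; lra. rewrite Rabs_Ropp. apply Rabs_pos_eq; lra. }
  rewrite H, rpow_pos_eq by auto. rewrite Rpower_mult. reflexivity.
Qed.

Lemma C_decode n : x n <> 0 -> a n <= 1 -> C_set (Rpower rr (1 / p)) (x n) ->
  exists k : nat, x n = Rpower rr (- INR k / p) \/ x n = - Rpower rr (- INR k / p).
Proof.
  intros Hn Ha HC. destruct HC as [H0 | [z Hz]]. contradiction.
  assert (Hs : 0 < Rpower rr (1 / p)) by apply exp_pos.
  rewrite powerRZ_Rpower in Hz by exact Hs. rewrite Rpower_mult in Hz.
  pose proof (a_of_t _ n Hz) as Ha'.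
  replace (1 / p * IZR z * p) with (IZR z) in Ha' by (field; lra).
  assert (Hz0 : (z <= 0)%Z).
  { apply le_IZR. destruct (Rle_dec (IZR z) 0) as [h|h]; auto. exfalso.
    assert (Rpower rr 0 < Rpower rr (IZR z)) by (apply Rpower_lt; [apply rr_gt1|lra]).
    rewrite Rpower_O in H by (pose proof rr_gt1; lra). lra. }
  exists (Z.to_nat (- z)).
  rewrite INR_IZR_INZ, Z2Nat.id by lia. rewrite opp_IZR.
  replace (- - IZR z / p) with (1 / p * IZR z) by (field; lra). exact Hz.
Qed.

Lemma build (Hdec : forall n, x n <> 0 -> exists k : nat,
    x n = Rpower rr (- INR k / p) \/ x n = - Rpower rr (- INR k / p)) :
  forall n, exists L : list (nat * (nat -> R)),
  (forall it, In it L -> KM q r (snd it)) /\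
  (forall i, (cnt i L <= 1)%nat) /\ (forall i, (n <= i)%nat -> cnt i L = 0%nat) /\
  sumR (fun it => / rr ^ (fst it)) L = fs a n /\
  (forall j, (j < n)%nat -> x j * F q r L j = a j) /\
  (forall j, (n <= j)%nat -> F q r L j = 0).
Proof.
  induction n as [|n IH].
  - exists nil. repeat split; intros; simpl in *; try contradiction; try lia; reflexivity.
  - destruct IH as [L (H1 & H2 & H3 & H4 & H5 & H6)].
    destruct (Req_EM_T (x n) 0) as [E|E].
    + exists L. assert (an : a n = 0).
      { unfold a. rewrite E, Rabs_R0. unfold rpow. destruct (Rle_dec 0 0); lra. }
      repeat split; auto.
      * intros i Hi. apply H3. lia.
      * simpl. rewrite H4, an. lra.
      * intros j Hj. destruct (Nat.eq_dec j n) as [->|ne]. rewrite E, an. lra. apply H5. lia.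
      * intros j Hj. apply H6. lia.
    + destruct (Hdec n E) as [k Hk].
      assert (Hy : exists (y : nat -> R) (sg : R), KM q r y /\ y n = sg /\
                 (forall i, i <> n -> y i = 0) /\ x n * sg = Rpower rr (- INR k / p)).
      { destruct Hk as [Hk|Hk].
        - exists (unit_vec n), 1. split. constructor. unfold unit_vec. rewrite Nat.eqb_refl.
          split; auto. split. intros i Hi. apply Nat.eqb_neq in Hi. rewrite Hi. auto. rewrite Hk. lra.
        - exists (fun i => - unit_vec n i), (-1). split. constructor. unfold unit_vec. rewrite Nat.eqb_refl.
          split; auto. split. intros i Hi. apply Nat.eqb_neq in Hi. rewrite Hi. lra. rewrite Hk. lra. }
      destruct Hy as [y [sg (Ky & Yn & Yo & Xs)]].
      assert (an : a n = Rpower rr (- INR k)).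
      { rewrite (a_of_t (- INR k / p) n Hk). f_equal. field. lra. }
      assert (rrpos : 0 < rr) by (pose proof rr_gt1; lra).
      exists ((k, y) :: L). repeat split.
      * intros it [Hit|Hit]. subst it. exact Ky. auto.
      * intros i. change (cnt i ((k, y) :: L)) with (ind (y i) + cnt i L)%nat.
        destruct (Nat.eq_dec i n) as [->|ne]. rewrite (H3 n (le_n n)). unfold ind.
        destruct (Req_EM_T _ 0); lia.
        rewrite (Yo i ne). unfold ind. destruct (Req_EM_T 0 0); [|congruence]. apply H2.
      * intros i Hi. change (cnt i ((k, y) :: L)) with (ind (y i) + cnt i L)%nat.
        rewrite (Yo i ltac:(lia)), (H3 i ltac:(lia)). unfold ind. destruct (Req_EM_T 0 0); [|congruence]. lia.
      * change (sumR (fun it : nat * (nat -> R) => / rr ^ fst it) ((k, y) :: L))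
          with (/ rr ^ k + sumR (fun it : nat * (nat -> R) => / rr ^ fst it) L).
        simpl fs. rewrite H4, an, Rpower_Ropp, Rpower_pow by auto. lra.
      * intros j Hj. change (F q r ((k, y) :: L) j) with (wt q r k * y j + F q r L j).
        destruct (Nat.eq_dec j n) as [->|ne].
        -- rewrite (H6 n (le_n n)), Yn, an. unfold wt. fold rr.
           replace (x n * (Rpower rr (- INR k / q) * sg + 0)) with (Rpower rr (- INR k / q) * (x n * sg)) by ring.
           rewrite Xs, <- Rpower_plus. f_equal.
           replace (- INR k / q + - INR k / p) with (- INR k * (1 / p + 1 / q)) by (field; lra).
           rewrite Hpq. ring.
        -- rewrite (Yo j ne), <- (H5 j ltac:(lia)). ring.
      * intros j Hj. change (F q r ((k, y) :: L) j) with (wt q r k * y j + F q r L j).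
        rewrite (Yo j ltac:(lia)), (H6 j ltac:(lia)). ring.
Qed.

Lemma fs_nonneg n : 0 <= fs a n.
Proof. induction n; simpl. lra. pose proof (a_nonneg n). lra. Qed.

Lemma Kr_INR N (L : list (nat * (nat -> R))) : (forall it, In it L -> (fst it <= N)%nat) ->
  INR (Kr r N L) = rr ^ N * sumR (fun it => / rr ^ (fst it)) L.
Proof.
  intros HN. unfold Kr. rewrite <- sumR_scal.
  assert (rrpos : 0 < rr) by (pose proof rr_gt1; lra).
  induction L as [|it L IH]. simpl. unfold sumR; simpl; lra.
  change (sumN (fun it0 : nat * (nat -> R) => (r ^ (N - fst it0))%nat) (it :: L))
    with (r ^ (N - fst it) + sumN (fun it0 : nat * (nat -> R) => (r ^ (N - fst it0))%nat) L)%nat.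
  rewrite plus_INR, IH by (intros; apply HN; right; auto).
  unfold sumR; simpl. f_equal. rewrite pow_INR. fold rr.
  assert (E : rr ^ N = rr ^ (N - fst it) * rr ^ fst it).
  { rewrite <- pow_add. f_equal. specialize (HN it (or_introl eq_refl)). lia. }
  rewrite E. field. apply pow_nonzero. lra.
Qed.

Lemma main_sec : N_alpha_p (Rpower (INR r) (1 / p)) p x ->
  Rbar_le (Finite (rpow (lp_norm p x) p)) (norm_pr q r x).
Proof.
  intros [[Nx HNx] [HC Hnorm]].
  assert (Ha0 : forall j, (Nx <= j)%nat -> a j = 0).
  { intros j Hj. unfold a. rewrite HNx, Rabs_R0 by auto. unfold rpow. destruct (Rle_dec 0 0); lra. }
  assert (HS : Series (fun i => rpow (Rabs (x i)) p) = fs a Nx) by exact (Series_finite a Nx Ha0).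
  set (S := fs a Nx) in *.
  assert (S0 : 0 <= S) by apply fs_nonneg.
  assert (S1 : S <= 1).
  { unfold lp_norm in Hnorm. rewrite HS in Hnorm. destruct (Rle_dec S 0) as [h|h]. lra.
    rewrite rpow_pos_eq in Hnorm by lra.
    assert (E : S = Rpower (Rpower S (1 / p)) p).
    { rewrite Rpower_mult. replace (1 / p * p) with 1 by (field; lra). rewrite Rpower_1; lra. }
    rewrite E. replace 1 with (Rpower 1 p) at 2.
    apply Rle_Rpower_l. lra. split; [apply exp_pos|auto].
    unfold Rpower. rewrite ln_1, Rmult_0_r, exp_0. reflexivity. }
  assert (Hdec : forall n, x n <> 0 -> exists k : nat,
    x n = Rpower rr (- INR k / p) \/ x n = - Rpower rr (- INR k / p)).
  { intros n Hn. apply C_decode; auto.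
    destruct (Nat.lt_ge_cases n Nx) as [h|h]. 2:{ exfalso. apply Hn, HNx, h. }
    pose proof (fs_ge a n Nx a_nonneg h). fold S in H. lra. }
  assert (Hlhs : rpow (lp_norm p x) p <= S).
  { unfold lp_norm. rewrite HS. destruct (Rle_dec S 0) as [h|h].
    - unfold rpow at 2. destruct (Rle_dec S 0); [|contradiction]. unfold rpow.
      destruct (Rle_dec 0 0); lra.
    - rewrite (rpow_pos_eq S) by lra. rewrite rpow_pos_eq by apply exp_pos.
      rewrite Rpower_mult. replace (1 / p * p) with 1 by (field; lra). rewrite Rpower_1; lra. }
  assert (Hex : exists y, KM q r y /\ inner x y = S).
  { destruct (build Hdec Nx) as [L (H1 & H2 & H3 & H4 & H5 & H6)].
    destruct L as [|it L'] eqn:EL.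
    - assert (Hx0 : forall j, x j = 0).
      { intros j. destruct (Nat.lt_ge_cases j Nx) as [h|h]. 2: apply HNx, h.
        specialize (H5 j h). unfold F, sumR in H5; simpl in H5. rewrite Rmult_0_r in H5.
        unfold a, rpow in H5. destruct (Rle_dec (Rabs (x j)) 0) as [h'|h'].
        pose proof (Rabs_pos (x j)). assert (Rabs (x j) = 0) by lra. now apply Rabs_eq_0.
        pose proof (exp_pos (p * ln (Rabs (x j)))). unfold Rpower in H5. lra. }
      assert (SS : S = 0).
      { unfold S. rewrite (fs_stable a 0). reflexivity. intros j _. unfold a. rewrite Hx0, Rabs_R0.
        unfold rpow. destruct (Rle_dec 0 0); lra. lia. }
      exists (unit_vec 0). split. constructor. unfold inner.
      rewrite (Series_finite _ 0). simpl. auto. intros j _. rewrite Hx0. ring.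
    - rewrite <- EL in *.
      set (N := list_max (map fst L)).
      assert (HN : forall it0, In it0 L -> (fst it0 <= N)%nat).
      { intros it0 Hi. apply (in_le_max r Hr). apply in_map. auto. }
      assert (HK : (Kr r N L <= r ^ N)%nat).
      { apply INR_le. rewrite Kr_INR by auto. rewrite H4, pow_INR. fold rr. fold S.
        pose proof (pow_le rr N ltac:(pose proof rr_gt1; lra)). nra. }
      destruct (kraft q r Hr ltac:(lra) (meas L) L N (le_n _) ltac:(rewrite EL; discriminate)
        H1 H2 HN HK) as [z [Kz Hz]].
      exists z. split; auto. unfold inner. rewrite <- HS. apply Series_ext. intros j. fold (a j).
      rewrite Hz. destruct (Nat.lt_ge_cases j Nx) as [h|h]. apply H5, h.
      rewrite HNx, Ha0 by auto. ring. }
  destruct Hex as [y [Ky Hy]].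
  apply Rbar_le_trans with (Finite S). simpl. exact Hlhs.
  destruct (Lub_Rbar_correct (fun t => exists y, KM q r y /\ t = inner x y)) as [Hub _].
  apply Hub. exists y. split; auto.
Qed.

End X.

Theorem mainTheorem3 (p q : R) (r : nat) (x : nat -> R) :
  1 < p -> 1 < q -> 1 / p + 1 / q = 1 -> (1 < r)%nat ->
  N_alpha_p (Rpower (INR r) (1 / p)) p x ->
  Rbar_le (Finite (rpow (lp_norm p x) p)) (norm_pr q r x).
Proof. intros Hp Hq Hpq Hr. apply main_sec; auto. Qed.
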